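(* Let $\delta\in\{1,-1\}$ and let $\alpha,\beta,\gamma\in\mathbb{Z}[i]$ satisfy $\alpha^2+(1+\delta i)\beta^2+\gamma^2=0$, $\alpha\beta\gamma\neq0$ and $\gcd(\alpha,\beta,\gamma)\in U$. Then $\beta\equiv0\pmod{(1+i)^2}$.
   Context: $\mathbb{Z}[i]$ is the ring of Gaussian integers, $U=\{1,-1,i,-i\}$ its unit group; $\gcd(\alpha,\beta,\gamma)\in U$ means no common non-unit divisor. *)

(* Defs.v *)
From mathcomp Require Import all_boot all_order all_algebra all_field.
Set Implicit Arguments. Unset Strict Implicit. Unset Printing Implicit Defensive.
Import Order.TTheory GRing.Theory Num.Theory.
Local Open Scope ring_scope.

Definition gaussian (z : algC) : Prop :=
  exists a b : int, z = a%:~R + 'i * b%:~R.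

Definition gdvd (d x : algC) : Prop :=
  exists q, gaussian q /\ x = q * d.

(* gcd(a,b,c) in U: every common divisor in Z[i] is a unit of Z[i] *)
Definition gcd3_unit (a b c : algC) : Prop :=
  forall d, gaussian d -> gdvd d a -> gdvd d b -> gdvd d c -> gdvd d 1.

(* Main.v *)
Require Import Defs.
From mathcomp Require Import all_boot all_order all_algebra all_field.
From mathcomp Require Import zify ring.
Import GRing.Theory Num.Theory.
Local Open Scope ring_scope.
Lemma dec2 (x : int) : exists p e : int, x = 2  *  p + e /\ (e = 0 \/ e = 1).
Proof.
exists (x %/ 2)%Z, (x %% 2)%Z; split.
  by rewrite mulrC -divz_eq.
have h1 := modz_ge0 x (isT : (2:int) != 0).
have h2 := ltz_pmod x (isT : (0:int) < 2).
lia.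
Qed.
Lemma parity (d a1 a2 b1 b2 c1 c2 : int) : (d = 1 \/ d = -1) ->
 a1 * a1 - a2 * a2 + b1 * b1 - b2 * b2 - 2 * d * b1 * b2 + c1 * c1 - c2 * c2 = 0 ->
 2 * a1 * a2 + 2 * b1 * b2 + d * b1 * b1 - d * b2 * b2 + 2 * c1 * c2 = 0 ->
 exists k1 k2, b1 = 2  *  k1 /\ b2 = 2  *  k2.
Proof.
move=> hd E1 E2.
have [p1 [e1 [ha1 he1]]] := dec2 a1.
have [p2 [e2 [ha2 he2]]] := dec2 a2.
have [q1 [f1 [hb1 hf1]]] := dec2 b1.
have [q2 [f2 [hb2 hf2]]] := dec2 b2.
have [r1 [g1 [hc1 hg1]]] := dec2 c1.
have [r2 [g2 [hc2 hg2]]] := dec2 c2.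
subst a1 a2 c1 c2.
case: hf1 => hf1; case: hf2 => hf2; subst f1 f2.
- by exists q1, q2; rewrite hb1 hb2 !addr0.
all: exfalso; subst b1 b2.
all: case: hd => hd; subst d.
all: case: he1 => ?; case: he2 => ?; case: hg1 => ?; case: hg2 => ?; subst; lia.
Qed.

Theorem lemma4p12 (delta : int) (alpha beta gamma : algC) :
  (delta = 1 \/ delta = -1) ->
  gaussian alpha -> gaussian beta -> gaussian gamma ->
  alpha ^+ 2 + (1 + delta%:~R * 'i) * beta ^+ 2 + gamma ^+ 2 = 0 ->
  alpha * beta * gamma != 0 ->
  gcd3_unit alpha beta gamma ->
  gdvd ((1 + 'i) ^+ 2) beta.
Proof.
move=> hd [a1 [a2 ha]] [b1 [b2 hb]] [c1 [c2 hc]] H _ _.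
have hi : ('i : algC) ^+ 2 + 1 = 0 by rewrite sqrCi addNr.
pose X := a1 * a1 - a2 * a2 + b1 * b1 - b2 * b2 - 2 * delta * b1 * b2 + c1 * c1 - c2 * c2.
pose Y := 2 * a1 * a2 + 2 * b1 * b2 + delta * b1 * b1 - delta * b2 * b2 + 2 * c1 * c2.
have E : (X%:~R : algC) + 'i * Y%:~R = 0.
  rewrite -H ha hb hc /X /Y.
  rewrite !(intrD, intrM, intrB) /=.
  apply/eqP; rewrite -subr_eq0; apply/eqP.
  set j := 'i in hi *.
  transitivity (- ((j ^+ 2 + 1) * ((a2%:~R) ^+ 2 + (c2%:~R) ^+ 2 + (b2%:~R) ^+ 2
     + 2 * delta%:~R * b1%:~R * b2%:~R + delta%:~R * j * (b2%:~R) ^+ 2)) : algC).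
    ring.
  by rewrite hi mul0r oppr0.
have EX : X = 0.
  have := congr1 (fun z => 'Re z) E; rewrite /= Re_rect ?realz // raddf0.
  by move/eqP; rewrite intr_eq0 => /eqP.
have EY : Y = 0.
  have := congr1 (fun z => 'Im z) E; rewrite /= Im_rect ?realz // raddf0.
  by move/eqP; rewrite intr_eq0 => /eqP.
have [k1 [k2 [e1 e2]]] := @parity delta a1 a2 b1 b2 c1 c2 hd EX EY.
exists (k2%:~R + 'i * (- k1)%:~R); split; first by exists k2, (- k1).
rewrite hb e1 e2 !(intrD, intrM, intrN) /=.
apply/eqP; rewrite -subr_eq0; apply/eqP.
set j := 'i in hi *.
transitivity ((j ^+ 2 + 1) * (2 * k1%:~R - (k2%:~R + j * (- k1)%:~R)) : algC); first ring.
by rewrite hi mul0r.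
Qed.
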